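(* For every integer $L\geq 0$, \[ \sum_{j=-\infty}^{\infty} \left(\frac{j}{3}\right) q^{\binom{j-1}{2}} {2L \brack L+j}_q =\begin{cases} \dfrac{(-1;q^3)_{L-1}}{(-1;q)_{L-1}}\, q^{L-1}\,\dfrac{1-q^3}{1-q}\,(1-q^L), & L>0,\\[2mm] 0, & L=0,\end{cases} \] where $\binom{j-1}{2}=\frac{(j-1)(j-2)}{2}$.
   Context: For a variable $a$ and integer $n\ge 0$, $(a;q)_n=(1-a)(1-aq)\cdots(1-aq^{n-1})$ (with $(a;q)_0=1$). The $q$-binomial coefficient is ${A \brack B}_q=\frac{(q;q)_A}{(q;q)_B(q;q)_{A-B}}$ if $0\le B\le A$ are integers, and $0$ otherwise. $\left(\frac{j}{3}\right)$ is the Legendre symbol modulo 3: it equals $1$ if $j\equiv 1 \pmod 3$, $-1$ if $j\equiv -1\pmod 3$, and $0$ if $3\mid j$. *)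

(* Defs.v *)
From HB Require Import structures.
From mathcomp Require Import all_boot all_order all_algebra.
Set Implicit Arguments. Unset Strict Implicit. Unset Printing Implicit Defensive.
Import Order.TTheory GRing.Theory Num.Theory.
Local Open Scope ring_scope.

Definition Fq : fieldType := {fraction {poly int}}.

Definition qvar : Fq := FracField.tofrac ('X : {poly int}).

Definition qpoch (F : fieldType) (a q : F) (n : nat) : F :=
  \prod_(i < n) (1 - a * q ^+ i).

Definition qbinom (F : fieldType) (q : F) (A B : int) : F :=
  if (0 <= B) && (B <= A) then
    qpoch q q `|A|%N / (qpoch q q `|B|%N * qpoch q q `|A - B|%N)
  else 0.

Definition leg3 (j : int) : int :=
  if (j %% 3)%Z == 1 then 1 else if (j %% 3)%Z == 2 then -1 else 0.

(* binom(j-1,2) = (j-1)(j-2)/2 (always a nonnegative integer) *)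
Definition binom2m1 (j : int) : int := (((j - 1) * (j - 2)) %/ 2)%Z.

Definition lhs_term (F : fieldType) (q : F) (L : nat) (j : int) : F :=
  (leg3 j)%:~R * q ^ (binom2m1 j) * qbinom q (2 * L)%N%:Z (L%:Z + j).

Definition lhs_partial (F : fieldType) (q : F) (L N : nat) : F :=
  \sum_(i < (2 * N).+1) lhs_term q L (i%:Z - N%:Z).

Definition rhs (F : fieldType) (q : F) (L : nat) : F :=
  if (0 < L)%N then
    qpoch (-1) (q ^+ 3) L.-1 / qpoch (-1) q L.-1 * q ^+ L.-1
      * ((1 - q ^+ 3) / (1 - q)) * (1 - q ^+ L)
  else 0.

(* Main.v *)
Require Import Defs.
From HB Require Import structures.
From mathcomp Require Import all_boot all_order all_algebra.
From mathcomp Require Import ring lra zify.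
Set Implicit Arguments. Unset Strict Implicit. Unset Printing Implicit Defensive.
Import Order.TTheory GRing.Theory Num.Theory.
Local Open Scope ring_scope.


Lemma pascal_abs (F : fieldType) (P K M A B : F) :
  K != 0 -> M != 0 -> 1 - A != 0 -> 1 - B != 0 ->
  P * (1 - A * B) / (K * (1 - A) * (M * (1 - B))) =
  P / (K * (1 - A) * M) + B * (P / (K * (M * (1 - B)))).
Proof. move=> hK hM hA hB. field. by rewrite hK hM hA hB. Qed.

Section QB.
Variable F : fieldType.
Variable q : F.
Hypothesis hq1 : forall n, (0 < n)%N -> 1 - q ^+ n != 0.

Definition qp n := qpoch q q n.
Definition qb n k : F := if (k <= n)%N then qp n / (qp k * qp (n - k)) else 0.

Lemma qpS n : qp n.+1 = qp n * (1 - q ^+ n.+1).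
Proof. by rewrite /qp /qpoch big_ord_recr /= exprS. Qed.

Lemma qp_neq0 n : qp n != 0.
Proof.
elim: n => [|n IH]; first by rewrite /qp /qpoch big_ord0 oner_neq0.
rewrite qpS; apply: mulf_neq0; [exact: IH | exact: hq1].
Qed.

Lemma qb_nn n : qb n n = 1.
Proof. by rewrite /qb leqnn subnn /qp /qpoch big_ord0 mulr1 divff ?qp_neq0. Qed.
Lemma qb_n0 n : qb n 0 = 1.
Proof. by rewrite /qb leq0n subn0 /qp /qpoch big_ord0 mul1r divff ?qp_neq0. Qed.

Lemma qpascal n k : (k <= n)%N -> qb n.+1 k.+1 = qb n k.+1 + q ^+ (n - k) * qb n k.
Proof.
move=> kn0; case: (ltnP k n) => kn; last first.
  have -> : k = n by lia.
  by rewrite (qb_nn n.+1) (qb_nn n) /qb ltnn subnn expr0 mulr1 add0r.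
rewrite /qb ltnS kn0 kn subSS.
have [m ->] : exists m, n = (k + m.+1)%N by exists (n - k.+1)%N; lia.
have -> : (k + m.+1 - k = m.+1)%N by lia.
have -> : (k + m.+1 - k.+1 = m)%N by lia.
rewrite !qpS.
have h1 := qp_neq0 k. have h2 := qp_neq0 m. have h3 := qp_neq0 (k + m.+1).
have h4 := hq1 (ltn0Sn k). have h5 := hq1 (ltn0Sn m).
have -> : q ^+ (k + m.+1).+1 = q ^+ k.+1 * q ^+ m.+1 by rewrite -exprD; congr (_ ^+ _); lia.
exact: pascal_abs.
Qed.

Definition cf n (y : F) k := q ^+ 'C(k, 2) * qb n k * y ^+ k.

Lemma cf_out n y k : (n < k)%N -> cf n y k = 0.
Proof. by move=> h; rewrite /cf /qb leqNgt h mulr0 mul0r. Qed.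

Lemma qbinT n (y : F) :
  \prod_(i < n) (1 + (q ^+ i * y) *: 'X) = \poly_(k < n.+1) cf n y k.
Proof.
elim: n => [|n IH].
  rewrite big_ord0; apply/polyP => i; rewrite coef_poly coef1.
  case: i => [|i] //=; by rewrite /cf qb_n0 !expr0 !mul1r.
rewrite big_ord_recr /= IH mulrDr mulr1 -scalerAr; apply/polyP => i.
rewrite coefD coefZ coefMX !coef_poly.
case: i => [|j] /=.
  rewrite mulr0 addr0 /cf !qb_n0; reflexivity.
case: (ltnP j n.+1) => hj; last first.
  have -> : (j.+1 < n.+2)%N = false by lia.
  have -> : (j.+1 < n.+1)%N = false by lia.
  rewrite mulr0 addr0; reflexivity.
have -> : (if (j.+1 < n.+1)%N then cf n y j.+1 else 0) = cf n y j.+1.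
  by case: ifP => // /negbT; rewrite -leqNgt => h; rewrite cf_out.
have -> : (j.+1 < n.+2)%N = true by lia.
rewrite /cf qpascal // binS bin1 exprD.
have -> : q ^+ n = q ^+ (n - j) * q ^+ j by rewrite -exprD subnK.
rewrite exprS.
move: (q ^+ j) (q ^+ 'C(j, 2)) (q ^+ (n - j)) (qb n j.+1) (qb n j) (y ^+ j) => a b c d e f.
ring.
Qed.
End QB.


Section PhiSec.
Variable F : fieldType.
Definition Phi : {poly F} := locked ('X^2 + 'X + 1).
Lemma PhiE : Phi = 'X^2 + 'X + 1. Proof. by rewrite /Phi -lock. Qed.

Lemma size_Phi : size Phi = 3%N.
Proof.
rewrite PhiE -addrA size_addl ?size_polyXn //.
by rewrite (leq_ltn_trans (size_add _ _)) // size_polyX size_poly1.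
Qed.

Lemma mod_small2 (r0 r1 : F) : (r1%:P * 'X + r0%:P) %% Phi = r1%:P * 'X + r0%:P.
Proof.
have H : leq (size (r1%:P * 'X + r0%:P)).+1 (size Phi).
  rewrite size_Phi size_MXaddC size_polyC.
  case: ifP => _; first exact: isT.
  case: (r1 != 0); exact: isT.
exact: (modp_small H).
Qed.

Lemma coef1_small2 (r0 r1 : F) : (r1%:P * 'X + r0%:P)`_1 = r1.
Proof. rewrite coefD coefMX (coefC r1) (coefC r0); exact: addr0. Qed.

Lemma modX3 m : ('X^(m + 3) : {poly F}) %% Phi = 'X^m %% Phi.
Proof.
have -> : ('X^(m + 3) : {poly F}) = 'X^m * ('X - 1) * Phi + 'X^m.
  rewrite PhiE exprD; ring.
by rewrite modpD modp_mull add0r.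
Qed.

Lemma modXm m : ('X^m : {poly F}) %% Phi = 'X^(m %% 3) %% Phi.
Proof.
rewrite {1}(divn_eq m 3); elim: (m %/ 3)%N => [|a IH]; first by rewrite mul0n add0n.
by rewrite mulSn -addnA addnC modX3.
Qed.

Lemma coefXmod m : (('X^m : {poly F}) %% Phi)`_1 = (leg3 m%:Z)%:~R.
Proof.
rewrite modXm /leg3 modz_nat.
have : (m %% 3 < 3)%N by rewrite ltn_mod.
case: (m %% 3)%N => [|[|[|r]]] // _.
- have -> : ('X^0 : {poly F}) = 0%:P * 'X + 1%:P by rewrite mul0r add0r expr0.
  by rewrite mod_small2 coef1_small2.
- have -> : ('X^1 : {poly F}) = 1%:P * 'X + 0%:P by rewrite mul1r addr0 expr1.
  by rewrite mod_small2 coef1_small2.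
- have -> : ('X^2 : {poly F}) = 1 * Phi + ((-1)%:P * 'X + (-1)%:P).
    by rewrite PhiE !polyCN; ring.
  rewrite modp_addl_mul_small ?coef1_small2; first reflexivity.
  rewrite size_Phi size_MXaddC size_polyC oppr_eq0 oner_eq0 andbF; exact: isT.
Qed.
End PhiSec.


Section Gen.
Variable F : fieldType.

Lemma size_small2 (r0 r1 : F) : leq (size (r1%:P * 'X + r0%:P)).+1 (size (Phi F)).
Proof.
rewrite size_Phi size_MXaddC size_polyC.
case: ifP => _; first exact: isT.
case: (r1 != 0); exact: isT.
Qed.

Lemma cubic_mod (a b c : F) :
  (((1 + a%:P * 'X) * (1 + b%:P * 'X) * (1 + c%:P * 'X)) %% Phi F)`_1
  = (a + b + c) - (a * b + a * c + b * c).
Proof.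
set e1 := a + b + c; set e2 := a * b + a * c + b * c; set e3 := a * b * c.
have -> : (1 + a%:P * 'X) * (1 + b%:P * 'X) * (1 + c%:P * 'X) =
   (e3%:P * 'X + (e2 - e3)%:P) * Phi F + ((e1 - e2)%:P * 'X + (1 - e2 + e3)%:P).
  rewrite PhiE /e1 /e2 /e3 !(polyCD, polyCB, polyCM, polyC1); ring.
by rewrite modp_addl_mul_small ?size_small2 // coef1_small2.
Qed.


Variable Q : F.
Hypothesis hQ : Q != 0.

Definition xL (L : nat) := (Q^-1) ^+ L.+1.
Definition PL (L : nat) : {poly F} :=
  'X^(2 * L) * \prod_(i < 2 * L) (1 + (Q ^+ i * xL L)%:P * 'X).
Definition GL (L : nat) : {poly F} :=
  (1 + (xL L)%:P * 'X) * (1 + (Q * xL L)%:P * 'X) * (1 + (Q ^+ 2 * xL L)%:P * 'X).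
Definition DL (L : nat) : F := \prod_(i < L.-1) (Q ^+ i + (Q^-1) ^+ i - 1).

Lemma expQ1 a b : Q ^+ (a + b) * (Q^-1) ^+ b = Q ^+ a.
Proof. by rewrite exprD exprVn mulfK // expf_neq0. Qed.

Lemma expQ2 a b : Q ^+ a * (Q^-1) ^+ (a + b) = (Q^-1) ^+ b.
Proof. by rewrite exprD !exprVn mulVKf // expf_neq0. Qed.

Lemma PL_mod n : PL n.+1 %% Phi F = (- (DL n.+1)%:P * GL n.+1) %% Phi F.
Proof.
elim: n => [|n IH].
  rewrite /PL /GL /DL /= big_ord0 big_ord_recr big_ord_recr big_ord0 /=.
  have -> : Q ^+ 2 * xL 1 = 1 by rewrite /xL (expQ1 0).
  set a := (Q ^+ 0 * xL 1)%:P; set b := (Q ^+ 1 * xL 1)%:P.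
  have -> : (xL 1)%:P = a by rewrite /a expr0 mul1r.
  have -> : ('X^(2 * 1) : {poly F}) * (1 * (1 + a * 'X) * (1 + b * 'X))
     = ((1 + a * 'X) * (1 + b * 'X)) * Phi F + (- 1%:P * ((1 + a * 'X) * (1 + b * 'X) * (1 + 1%:P * 'X))).
    rewrite PhiE; ring.
  by rewrite modpD modp_mull add0r.
set x := xL n.+1.
have hx' : xL n.+2 = Q^-1 * x by rewrite /xL /x exprS.
set b := Q ^+ (2 * n.+1).+1 * xL n.+2.
set c := Q ^+ 2 * x.
have hb : b = Q ^+ n.
  rewrite /b /xL; have -> : ((2 * n.+1).+1 = n + n.+3)%N by lia. by rewrite expQ1.
have hc : c = (Q^-1) ^+ n.
  rewrite /c /x /xL; have -> : (n.+2 = 2 + n)%N by lia. by rewrite expQ2.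
have hbc : b * c = 1 by rewrite hb hc exprVn mulfV // expf_neq0.
have hD : DL n.+2 = DL n.+1 * (b + c - 1) by rewrite /DL /= big_ord_recr /= hb hc.
have hG : GL n.+2 = (1 + (xL n.+2)%:P * 'X) * (1 + x%:P * 'X) * (1 + (Q * x)%:P * 'X).
  have h1 : Q * xL n.+2 = x by rewrite hx' mulVKf.
  have h2 : Q ^+ 2 * xL n.+2 = Q * x by rewrite expr2 -mulrA h1.
  by rewrite /GL h1 h2.
have hP : PL n.+2 = ('X^2 * (1 + (xL n.+2)%:P * 'X) * (1 + b%:P * 'X)) * PL n.+1.
  rewrite /PL.
  have -> : (2 * n.+2 = (2 * n.+1).+2)%N by lia.
  set k := (2 * n.+1)%N.
  rewrite big_ord_recl big_ord_recr /= expr0 mul1r -/b.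
  rewrite (eq_bigr (fun i : 'I_k => 1 + (Q ^+ i * x)%:P * 'X)); last first.
    move=> i _; rewrite /= hx' exprSr -mulrA mulVKf //.
  move: (\prod_(i < k) _) => M.
  have -> : ('X^(k.+2) : {poly F}) = ('X^2) * ('X^k) by rewrite -exprD add2n.
  ring.
rewrite hP -modp_mul IH modp_mul hG hD /GL -/x -/c.
set Xp := (xL n.+2)%:P; set Xa := x%:P; set Xb := (Q * x)%:P.
have hBC : b%:P * c%:P = 1 :> {poly F} by rewrite -polyCM hbc.
rewrite [(DL n.+1 * _)%:P]polyCM [(b + c - 1)%:P]polyCB [(b + c)%:P]polyCD polyC1.
set Bp := b%:P; set Cp := c%:P; set Dp := (DL n.+1)%:P.
set K := (1 + Xp * 'X) * (1 + Xa * 'X) * (1 + Xb * 'X).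
set Qd := Bp * Cp * 'X^2 + (Bp + Cp - Bp * Cp) * 'X + (1 - Bp - Cp).
have -> : 'X^2 * (1 + Xp * 'X) * (1 + Bp * 'X) *
    (- Dp * ((1 + Xa * 'X) * (1 + Xb * 'X) * (1 + Cp * 'X))) =
    - (Dp * (Bp + Cp - 1%:P)) * K + (- Dp * K * Qd) * Phi F + (1 - Bp * Cp) * (Dp * K * 'X).
  rewrite /K /Qd PhiE; ring.
by rewrite hBC subrr mul0r addr0 modpD modp_mull addr0.
Qed.
End Gen.


Lemma bin2x2 k : ('C(k, 2) * 2 + k = k * k)%N.
Proof.
elim: k => [|k IH] //.
rewrite binS bin1; nia.
Qed.

Lemma binom2m1_eval (k L : nat) :
  binom2m1 (k%:Z - L%:Z) = ('C(k, 2) + 'C(L.+2, 2))%N%:Z - (k * L.+1)%N%:Z.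
Proof.
rewrite /binom2m1.
have h1 := bin2x2 k. have h2 := bin2x2 L.+2.
have -> : ((k%:Z - L%:Z - 1) * (k%:Z - L%:Z - 2) =
   (('C(k, 2) + 'C(L.+2, 2))%N%:Z - (k * L.+1)%N%:Z) * 2)%R.
  lia.
by rewrite mulzK.
Qed.

Lemma leg3_shift (j : int) (m : nat) : leg3 (j + (m * 3)%N%:Z) = leg3 j.
Proof.
rewrite /leg3; have -> : ((j + (m * 3)%N%:Z) %% 3)%Z = (j %% 3)%Z; last by [].
by rewrite addrC PoszM modzMDl.
Qed.

Section Main.
Variable F : fieldType.
Variable q : F.
Hypothesis hq0 : q != 0.
Hypothesis hq1 : forall n, (0 < n)%N -> 1 - q ^+ n != 0.
Hypothesis hq2 : forall n, 1 + q ^+ n != 0.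

Lemma coef_shift (m N : nat) (c : nat -> F) :
  (('X^m * \poly_(k < N) c k) %% Phi F)`_1 = \sum_(k < N) c k * (leg3 (k + m)%N%:Z)%:~R.
Proof.
rewrite poly_def mulr_sumr.
rewrite (big_morph (fun p => p %% Phi F) (fun p r => modpD (Phi F) p r) (mod0p _)).
rewrite coef_sum; apply: eq_bigr => k _.
by rewrite -scalerAr modpZl coefZ -exprD addnC coefXmod.
Qed.

Lemma reindex (L N : nat) (f : int -> F) : (L <= N)%N ->
  (forall j : int, (j < - L%:Z) || (L%:Z < j) -> f j = 0) ->
  \sum_(i < (2 * N).+1) f (i%:Z - N%:Z) = \sum_(k < (2 * L).+1) f (k%:Z - L%:Z).
Proof.
move=> LN hf.
rewrite -(big_mkord xpredT (fun i => f (i%:Z - N%:Z))).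
rewrite -(big_mkord xpredT (fun i => f (i%:Z - L%:Z))).
rewrite (big_cat_nat _ (n := (N - L)%N)) //=; last by lia.
rewrite (big_cat_nat _ (m := (N - L)%N) (n := (N - L + (2 * L).+1)%N)) //=; [|lia|lia].
rewrite [X in X + _ = _]big1_seq ?add0r; last first.
  move=> i /andP [_]; rewrite mem_index_iota => /andP [h1 h2]; apply: hf; lia.
rewrite [X in _ + X = _]big1_seq ?addr0; last first.
  move=> i /andP [_]; rewrite mem_index_iota => /andP [h1 h2]; apply: hf; lia.
rewrite -{1}(add0n (N - L)%N) big_addn.
have -> : (N - L + (2 * L).+1 - (N - L) = (2 * L).+1)%N by lia.
apply: eq_bigr => i _; congr f; lia.
Qed.

Lemma term_eval (L k : nat) : (k <= 2 * L)%N ->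
  lhs_term q L (k%:Z - L%:Z) =
  q ^+ 'C(L.+2, 2) * (cf q (2 * L) (xL q L) k * (leg3 (k + 2 * L)%N%:Z)%:~R).
Proof.
move=> hk.
have -> : (k + 2 * L)%N%:Z = (k%:Z - L%:Z) + (L * 3)%N%:Z by lia.
rewrite leg3_shift /lhs_term binom2m1_eval.
have -> : L%:Z + (k%:Z - L%:Z) = k%:Z by ring.
rewrite /qbinom ifT; last by apply/andP; split; lia.
have -> : ((2 * L)%N%:Z - k%:Z) = (2 * L - k)%N%:Z by lia.
rewrite !absz_nat /cf /qb hk /qp.
rewrite expfzDr // -exprnN -!exprnP exprD.
rewrite -exprVn mulnC exprM /xL.
set u := q ^+ 'C(k, 2); set v := q ^+ 'C(L.+2, 2).
set w := ((q^-1) ^+ L.+1) ^+ k.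
set r := (leg3 (k%:Z - L%:Z))%:~R.
set z := qpoch q q (2 * L) / (qpoch q q k * qpoch q q (2 * L - k)).
ring.
Qed.

Lemma D_closed n :
  DL q n.+1 = (q^-1) ^+ 'C(n, 2) * \prod_(i < n) (1 - q ^+ i + q ^+ i * q ^+ i).
Proof.
rewrite /DL /=.
rewrite (eq_bigr (fun i : 'I_n => (q^-1) ^+ i * (1 - q ^+ i + q ^+ i * q ^+ i))); last first.
  move=> i _; have hi : q ^+ i != 0 by rewrite expf_neq0.
  by rewrite exprVn; field.
rewrite big_split /= prodrXr -bin2_sum big_mkord; congr (_ ^+ _ * _).
Qed.

Lemma ratio n :
  qpoch (-1) (q ^+ 3) n / qpoch (-1) q n = \prod_(i < n) (1 - q ^+ i + q ^+ i * q ^+ i).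
Proof.
rewrite /qpoch.
rewrite (eq_bigr (fun i : 'I_n => (1 - (-1) * q ^+ i) * (1 - q ^+ i + q ^+ i * q ^+ i))); last first.
  move=> i _; rewrite -exprM mulnC exprM; set y := q ^+ i; ring.
rewrite big_split /= mulrC mulKf //.
rewrite prodf_seq_neq0; apply/allP => i _ /=.
by rewrite mulN1r opprK.
Qed.

Lemma main_gen (L N : nat) : (L <= N)%N -> lhs_partial q L N = rhs q L.
Proof.
move=> LN.
have van : forall j : int, (j < - L%:Z) || (L%:Z < j) -> lhs_term q L j = 0.
  move=> j hj; rewrite /lhs_term /qbinom ifF ?mulr0 //.
  apply/negbTE/negP => /andP [h1 h2]; move: hj; lia.
rewrite /lhs_partial (reindex LN van).
case: L LN van => [|n] LN van.
  rewrite big_ord1 /rhs /= /lhs_term /leg3 /=; by rewrite !mul0r.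
rewrite (eq_bigr (fun k : 'I_(2 * n.+1).+1 =>
   q ^+ 'C(n.+3, 2) * (cf q (2 * n.+1) (xL q n.+1) k * (leg3 (k + 2 * n.+1)%N%:Z)%:~R)));
  last by move=> k _; rewrite term_eval // -ltnS.
rewrite -mulr_sumr -coef_shift -qbinT //.
have -> : 'X^(2 * n.+1) * \prod_(i < 2 * n.+1) (1 + (q ^+ i * xL q n.+1) *: 'X) = PL q n.+1.
  by rewrite /PL; congr (_ * _); apply: eq_bigr => i _; rewrite mul_polyC.
rewrite PL_mod // /GL -polyCN [(- DL q n.+1)%:P * _]mul_polyC modpZl coefZ cubic_mod D_closed.
rewrite /rhs /= ratio.
set P := \prod_(i < n) _.
have hC : 'C(n.+3, 2) = ('C(n, 2) + n + n + n + 3)%N.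
  by have := bin2x2 n; have := bin2x2 n.+3; nia.
rewrite hC /xL !exprD !exprVn.
have -> : q ^+ n.+2 = q ^+ n * q ^+ 2 by rewrite -exprD addn2.
have -> : q ^+ n.+1 = q ^+ n * q by rewrite exprS mulrC.
have h1 : q ^+ 'C(n, 2) != 0 by rewrite expf_neq0.
have h2 : q ^+ n != 0 by rewrite expf_neq0.
have h3 : 1 - q != 0 by have := hq1 (ltn0Sn 0); rewrite expr1.
field.
by rewrite h1 h2 h3 hq0.
Qed.
End Main.




Lemma qX n : qvar ^+ n = FracField.tofrac ('X^n : {poly int}).
Proof. by rewrite /qvar rmorphXn. Qed.

Lemma q_neq0 : qvar != 0.
Proof. by rewrite /qvar tofrac_eq0 polyX_eq0. Qed.

Lemma one_sub_qn_neq0 n : (0 < n)%N -> 1 - qvar ^+ n != 0.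
Proof.
move=> n0; rewrite qX -(rmorph1 (@FracField.tofrac _)) -rmorphB tofrac_eq0.
rewrite subr_eq0; apply/eqP => /(congr1 (size : {poly int} -> nat)).
by rewrite size_polyXn size_poly1; case: n n0.
Qed.

Lemma one_add_qn_neq0 n : 1 + qvar ^+ n != 0.
Proof.
rewrite qX -(rmorph1 (@FracField.tofrac _)) -rmorphD tofrac_eq0.
case: n => [|n].
  by rewrite expr0; apply/eqP => /(congr1 (fun p : {poly int} => p`_0)); rewrite coefD coef1 coef0.
rewrite addrC; apply/eqP => /(congr1 (size : {poly int} -> nat)).
by rewrite size_addl ?size_polyXn ?size_poly1 // size_poly0.
Qed.


Theorem theorem2p1 (L : nat) :
  forall N : nat, (L <= N)%N -> lhs_partial qvar L N = rhs qvar L.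
Proof.
move=> N LN.
exact: (main_gen q_neq0 one_sub_qn_neq0 one_add_qn_neq0 LN).
Qed.
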